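(* Let $x_0\in C^\eta_p$ (some $\eta\in\mathbb{N}^p$) be continuous on $[-\tau,0]$, and let $x:[-\tau,T]\to\mathbb{R}^d$ be a solution with initial segment $x_0$. Let $m,\bar m\in\mathbb{N}$ with $\bar m\ge1$, $0<\varepsilon_1,\varepsilon_2<h$, $t_1=mh+\varepsilon_1$, $t_2=(m+\bar m)h+\varepsilon_2$, with $(m+\bar m+1)h+\varepsilon_2\le T$, and $n=\lfloor m/p\rfloor-1\ge0$. For $k\in\{0,\dots,n+1\}$ and $i\in\{0,\dots,p\}$ let $L^{[k]}_i$, $C^{[k]}_{i,j}$ ($j=1,\dots,\bar m$), $R^{[k]}_i$, $\widetilde R^{[k]}_i$ be boxes such that $x^{[k]}(s)$ lies in $L^{[k]}_i$ for $s\in[(m-i)h+\varepsilon_1,(m-i+1)h]$, in $C^{[k]}_{i,j}$ for $s\in[(m-i+j)h,(m-i+j+1)h]$, in $R^{[k]}_i$ for $s\in[(m-i+\bar m)h,(m-i+\bar m)h+\varepsilon_2]$, and in $\widetilde R^{[k]}_i$ for $s\in[(m-i+\bar m+1)h,(m-i+\bar m+1)h+\varepsilon_2]$. Then for every $t\in[t_1,t_2]$: (a) $x_t\in C^n_p$ and $x_t\in C^{n+1}([-\tau,0])$; (b) $z(x_t)\in\mathrm{hull}\big(L^{[0]}_0,C^{[0]}_{0,1},\dots,C^{[0]}_{0,\bar m-1},R^{[0]}_0\big)$; (c) for $i\in\{1,\dots,p\}$, $k\in\{0,\dots,n\}$: $j_{i,[k]}(x_t)\in\mathrm{hull}\big(L^{[k]}_i,C^{[k]}_{i,1},\dots,C^{[k]}_{i,\bar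 m-1},R^{[k]}_i\big)$; (d) for $i\in\{1,\dots,p\}$ and $s\in[0,h)$: $\xi_i(x_t)(s)\in\mathrm{hull}\big(L^{[n+1]}_i,C^{[n+1]}_{i,1},\dots,C^{[n+1]}_{i,\bar m},\widetilde R^{[n+1]}_i\big)$.
   Context: Fix integers $d\ge1$, $p\ge1$, a delay $\tau>0$, and set $h=\tau/p$, grid points $t_i=-ih$. Let $f:\mathbb{R}^d\times\mathbb{R}^d\to\mathbb{R}^d$ be $C^\infty$ and consider the DDE $x'(t)=f(x(t),x(t-\tau))$. Segments: $x_t(s)=x(t+s)$, $s\in[-\tau,0]$. For $g$ of class $C^k$, $g^{[k]}:=g^{(k)}/k!$ (one-sided derivatives at endpoints). For $\eta\in\mathbb{N}^p$, $C^\eta_p$ is the set of $x:[-\tau,0]\to\mathbb{R}^d$ such that for each $i$ the restriction of $x$ to $[t_i,t_i+h)$ coincides with the restriction of some $\tilde x_i\in C^{\eta_i+1}([t_i,t_i+h])$; for $s\in[t_i,t_i+h)$, $x^{[k]}(s):=\tilde x_i^{[k]}(s)$. $C^n_p:=C^{(n,\dots,n)}_p$. For $x\in C^n_p$: $z(x)=x(0)$, $j_{i,[k]}(x)=x^{[k]}(t_i)$ for $0\le k\le n$, and $\xi_i(x)(s)=x^{[n+1]}(t_i+s)$ for $s\in[0,h)$. A solution on $[-\tau,T]$ with initial segment $x_0$ is $x:[-\tau,T]\to\mathbb{R}^d$ with $x|_{[-\tau,0]}=x_0$, continuous on $[0,T]$, whose right derivative at each $t\in[0,T)$ exists and equals $f(x(t),x(t-\tau))$.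 A box is a product of $d$ compact intervals; $\mathrm{hull}(A_1,\dots,A_r)$ is the smallest box containing $A_1\cup\dots\cup A_r$. *)

(* Defs.v *)
From Stdlib Require Import Reals List Factorial.
From Coquelicot Require Import Coquelicot.
From mathcomp Require Import ssreflect ssrbool eqtype fintype.

Open Scope R_scope.

Definition vec (d : nat) := 'I_d -> R.

Definition Icc (a b : R) : R -> Prop := fun s => a <= s <= b.

Definition has_deriv_within (a b : R) (g : R -> R) (s l : R) : Prop :=
  filterlim (fun u => (g u - g s) / (u - s))
    (within (fun u => a <= u <= b /\ u <> s) (locally s)) (locally l).

Definition cont_within (D : R -> Prop) (g : R -> R) (s : R) : Prop :=
  filterlim g (within D (locally s)) (locally (g s)).

Definition deriv_chain {d : nat} (a b : R) (k : nat) (g : R -> vec d)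
    (D : nat -> R -> vec d) : Prop :=
  (forall s, a <= s <= b -> forall c, D O s c = g s c) /\
  (forall (j : nat) s, (j < k)%nat -> a <= s <= b -> forall c,
      has_deriv_within a b (fun u => D j u c) s (D (S j) s c)).

Definition Ck_on {d : nat} (a b : R) (k : nat) (g : R -> vec d) : Prop :=
  exists D, deriv_chain a b k g D /\
    forall s, a <= s <= b -> forall c, cont_within (Icc a b) (fun u => D k u c) s.

(* v = g^{[k]}(s) = g^{(k)}(s)/k!, derivatives taken relative to [a,b] *)
Definition taylor_at {d : nat} (a b : R) (k : nat) (g : R -> vec d) (s : R)
    (v : vec d) : Prop :=
  exists D, deriv_chain a b k g D /\ forall c, v c = D k s c / INR (fact k).

Definition hstep (p : nat) (tau : R) : R := tau / INR p.
Definition tgrid (p : nat) (tau : R) (i : nat) : R := - INR i * hstep p tau.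

(* x in C^eta_p  (eta : N^p, used at indices 1..p) *)
Definition in_Cp {d : nat} (p : nat) (tau : R) (eta : nat -> nat) (y : R -> vec d) : Prop :=
  forall i : nat, (1 <= i <= p)%nat -> exists yt : R -> vec d,
    Ck_on (tgrid p tau i) (tgrid p tau i + hstep p tau) (eta i + 1) yt /\
    forall s, tgrid p tau i <= s < tgrid p tau i + hstep p tau -> forall c, yt s c = y s c.

(* v = y^{[k]}(s) for s in [t_i, t_i + h), computed from the piece ytilde_i *)
Definition piece_taylor {d : nat} (p : nat) (tau : R) (y : R -> vec d)
    (i k : nat) (s : R) (v : vec d) : Prop :=
  exists yt : R -> vec d,
    (forall u, tgrid p tau i <= u < tgrid p tau i + hstep p tau -> forall c, yt u c = y u c) /\
    taylor_at (tgrid p tau i) (tgrid p tau i + hstep p tau) k yt s v.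

(* j_{i,[k]}(y) = y^{[k]}(t_i) *)
Definition jcoef {d : nat} (p : nat) (tau : R) (y : R -> vec d) (i k : nat) (v : vec d) :=
  piece_taylor p tau y i k (tgrid p tau i) v.

(* xi_i(y)(s) = y^{[n+1]}(t_i + s) *)
Definition xicoef {d : nat} (p : nat) (tau : R) (n : nat) (y : R -> vec d) (i : nat)
    (s : R) (v : vec d) :=
  piece_taylor p tau y i (S n) (tgrid p tau i + s) v.

Definition seg {d : nat} (x : R -> vec d) (t : R) : R -> vec d := fun s => x (t + s).

Record box (d : nat) := Box { blo : vec d ; bhi : vec d }.
Arguments blo {d}. Arguments bhi {d}.

Definition in_box {d : nat} (v : vec d) (B : box d) : Prop :=
  forall c, blo B c <= v c <= bhi B c.

(* membership in hull(A_1,...,A_r): the smallest box containing the union,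
   i.e. the intersection of all boxes containing every A_j *)
Definition in_hull {d : nat} (v : vec d) (As : list (box d)) : Prop :=
  forall B : box d,
    (forall A, In A As -> forall w, in_box w A -> in_box w B) -> in_box v B.

(* smoothness of f : R^d x R^d -> R^d: all iterated partial derivatives
   exist everywhere and are continuous *)
Definition upd {d : nat} (a : vec d) (j : 'I_d) (u : R) : vec d :=
  fun c => if c == j then u else a c.

Definition updp {d : nat} (w : vec d * vec d) (j : 'I_d + 'I_d) (u : R) : vec d * vec d :=
  match j with
  | inl j => (upd (fst w) j u, snd w)
  | inr j => (fst w, upd (snd w) j u)
  end.

Definition coordp {d : nat} (w : vec d * vec d) (j : 'I_d + 'I_d) : R :=
  match j with inl j => fst w j | inr j => snd w j end.

Definition partial {d : nat} (G : vec d * vec d -> R) (j : 'I_d + 'I_d)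
    (w : vec d * vec d) : R :=
  Derive (fun u => G (updp w j u)) (coordp w j).

Fixpoint iter_partial {d : nat} (js : list ('I_d + 'I_d)) (G : vec d * vec d -> R)
    : vec d * vec d -> R :=
  match js with
  | nil => G
  | j :: js' => partial (iter_partial js' G) j
  end.

Definition cont2 {d : nat} (G : vec d * vec d -> R) (w : vec d * vec d) : Prop :=
  forall eps : R, 0 < eps -> exists delta : R, 0 < delta /\
    forall w' : vec d * vec d,
      (forall c, Rabs (fst w' c - fst w c) < delta /\ Rabs (snd w' c - snd w c) < delta) ->
      Rabs (G w' - G w) < eps.

Definition smooth_fun {d : nat} (f : vec d -> vec d -> vec d) : Prop :=
  forall (c : 'I_d) (js : list ('I_d + 'I_d)) (w : vec d * vec d),
    let G := iter_partial js (fun w0 => f (fst w0) (snd w0) c) in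
    (forall j, ex_derive (fun u => G (updp w j u)) (coordp w j)) /\ cont2 G w.

Definition is_solution {d : nat} (tau : R) (f : vec d -> vec d -> vec d)
    (x0 : R -> vec d) (T : R) (x : R -> vec d) : Prop :=
  (forall s, -tau <= s <= 0 -> forall c, x s c = x0 s c) /\
  (forall t, 0 <= t <= T -> forall c, cont_within (Icc 0 T) (fun u => x u c) t) /\
  (forall t, 0 <= t < T -> forall c,
      filterlim (fun u => (x u c - x t c) / (u - t)) (at_right t)
        (locally (f (x t) (x (t - tau)) c))).

Definition hull_list {d : nat} (A : box d) (B : nat -> box d) (r : nat) (Z : box d)
    : list (box d) :=
  A :: map B (seq 1 r) ++ Z :: nil.

(* Main.v *)
Require Import Defs.
From Stdlib Require Import Reals List Lra Lia Classical Factorial.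
From Coquelicot Require Import Coquelicot.
From mathcomp Require Import ssreflect ssrbool eqtype fintype.
Open Scope R_scope.

Lemma ball_R (x e y : R) : ball x e y <-> Rabs (y - x) < e.
Proof. rewrite /ball /= /AbsRing_ball /abs /minus /plus /opp /=. by []. Qed.

Lemma cw_eps D g s : cont_within D g s ->
  forall e, 0 < e -> exists dl, 0 < dl /\
    forall u, D u -> Rabs (u - s) < dl -> Rabs (g u - g s) < e.
Proof.
move=> H e he.
have [dl Hdl] := proj1 (filterlim_locally _ _) H (mkposreal e he).
exists dl; split; first by apply: cond_pos.
move=> u Du Hu. apply/ball_R. apply: Hdl => //; try by apply/ball_R.
Qed.

Lemma eps_cw D g s :
  (forall e, 0 < e -> exists dl, 0 < dl /\
    forall u, D u -> Rabs (u - s) < dl -> Rabs (g u - g s) < e) ->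
  cont_within D g s.
Proof.
move=> H. apply/filterlim_locally => eps.
have [dl [Hdl H']] := H eps (cond_pos eps).
exists (mkposreal dl Hdl) => u Hu Du. apply/ball_R. apply: H' => //; try by apply/ball_R.
Qed.

Lemma cpt_eps g s : continuity_pt g s ->
  forall e, 0 < e -> exists dl, 0 < dl /\
    forall u, Rabs (u - s) < dl -> Rabs (g u - g s) < e.
Proof.
move=> /continuity_pt_filterlim H e he.
have [dl Hdl] := proj1 (filterlim_locally _ _) H (mkposreal e he).
exists dl; split; first by apply: cond_pos.
move=> u Hu. apply/ball_R. apply: Hdl; try by apply/ball_R.
Qed.

Lemma eps_cpt g s :
  (forall e, 0 < e -> exists dl, 0 < dl /\
    forall u, Rabs (u - s) < dl -> Rabs (g u - g s) < e) ->
  continuity_pt g s.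
Proof.
move=> H. apply/continuity_pt_filterlim. apply/filterlim_locally => eps.
have [dl [Hdl H']] := H eps (cond_pos eps).
exists (mkposreal dl Hdl) => u Hu. apply/ball_R. apply: H'; try by apply/ball_R.
Qed.

Lemma ar_eps q t L : filterlim q (at_right t) (locally L) ->
  forall e, 0 < e -> exists dl, 0 < dl /\
    forall u, t < u < t + dl -> Rabs (q u - L) < e.
Proof.
move=> H e he.
have [dl Hdl] := proj1 (filterlim_locally _ _) H (mkposreal e he).
exists dl; split; first by apply: cond_pos.
move=> u Hu. apply/ball_R. apply: Hdl; last lra. apply/ball_R.
rewrite Rabs_right; simpl in *; lra.
Qed.

Lemma derive_eps g s l : is_derive g s l ->
  forall e, 0 < e -> exists dl, 0 < dl /\
    forall h, h <> 0 -> Rabs h < dl -> Rabs ((g (s + h) - g s) / h - l) < e.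
Proof.
move=> /is_derive_Reals H e he. have [dl Hdl] := H e he.
exists dl; split; [apply: cond_pos | done].
Qed.

Lemma eps_derive g s l :
  (forall e, 0 < e -> exists dl, 0 < dl /\
    forall h, h <> 0 -> Rabs h < dl -> Rabs ((g (s + h) - g s) / h - l) < e) ->
  is_derive g s l.
Proof.
move=> H. apply/is_derive_Reals => e he. have [dl [Hdl H']] := H e he.
exists (mkposreal dl Hdl) => h h0 hl. exact: H'.
Qed.

Lemma locally_open a b s : a < s < b -> locally s (fun t => a < t < b).
Proof.
move=> Hs. have Hp : 0 < Rmin (s - a) (b - s) by apply: Rmin_pos; lra.
exists (mkposreal _ Hp) => y /ball_R /= Hy.
have := Rmin_l (s - a) (b - s). have := Rmin_r (s - a) (b - s).
have [? ?] := Rabs_def2 _ _ Hy. simpl in *. lra.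
Qed.

Fixpoint Crec (r : nat) (g : R -> R) (a b : R) : Prop :=
  match r with
  | O => forall s, a < s < b -> continuity_pt g s
  | S r' => (forall s, a < s < b -> ex_derive g s) /\ Crec r' (Derive g) a b
  end.

Lemma loc_eq a b (g gp : R -> R) s : a < s < b -> (forall u, a < u < b -> g u = gp u) ->
  locally s (fun u => g u = gp u).
Proof.
move=> Hs H. apply: filter_imp (locally_open _ _ _ Hs) => u Hu. exact: H.
Qed.

Lemma Crec_ext r : forall g g' a b, (forall s, a < s < b -> g s = g' s) ->
  Crec r g a b -> Crec r g' a b.
Proof.
elim: r => [|r IH] g g' a b H /=.
  move=> Hc s Hs. apply: continuity_pt_ext_loc (Hc s Hs). exact: loc_eq Hs H.
move=> [Hd Hc]; split.
  move=> s Hs. apply: ex_derive_ext_loc (Hd s Hs). exact: loc_eq Hs H.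
apply: IH Hc => s Hs. apply: Derive_ext_loc. exact: loc_eq Hs H.
Qed.

Lemma cpt_of_ex_derive g s : ex_derive g s -> continuity_pt g s.
Proof. move=> H. apply/continuity_pt_filterlim. exact: ex_derive_continuous. Qed.

Lemma Crec_weaken r : forall g a b, Crec (S r) g a b -> Crec r g a b.
Proof.
elim: r => [|r IH] g a b /=.
  move=> [Hd _] s Hs. exact: cpt_of_ex_derive (Hd s Hs).
move=> [Hd Hc]; split => //. exact: IH.
Qed.

Lemma Crec_sub r : forall g a b a' b', a <= a' -> b' <= b ->
  Crec r g a b -> Crec r g a' b'.
Proof.
elim: r => [|r IH] g a b a' b' H1 H2 /=.
  move=> Hc s Hs. apply: Hc. lra.
move=> [Hd Hc]; split.
  move=> s Hs. apply: Hd. lra.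
exact: IH Hc.
Qed.

Lemma Crec_const r : forall c a b, Crec r (fun _ => c) a b.
Proof.
elim: r => [|r IH] c a b /=.
  move=> s _. exact: continuity_pt_const.
split; first by move=> s _; apply: ex_derive_const.
apply: Crec_ext (IH 0 a b) => s _. by rewrite Derive_const.
Qed.

Lemma Crec_plus r : forall g g' a b, Crec r g a b -> Crec r g' a b ->
  Crec r (fun s => g s + g' s) a b.
Proof.
elim: r => [|r IH] g g' a b /=.
  move=> H H' s Hs. exact: continuity_pt_plus (H s Hs) (H' s Hs).
move=> [Hd Hc] [Hd' Hc']; split.
  move=> s Hs. exact: ex_derive_plus (Hd s Hs) (Hd' s Hs).
apply: Crec_ext (IH _ _ _ _ Hc Hc') => s Hs.
by rewrite Derive_plus //; [apply: Hd | apply: Hd'].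
Qed.

Lemma Crec_mult r : forall g g' a b, Crec r g a b -> Crec r g' a b ->
  Crec r (fun s => g s * g' s) a b.
Proof.
elim: r => [|r IH] g g' a b /=.
  move=> H H' s Hs. exact: continuity_pt_mult (H s Hs) (H' s Hs).
move=> [Hd Hc] [Hd' Hc']; split.
  move=> s Hs. exact: ex_derive_mult (Hd s Hs) (Hd' s Hs).
have Hg : Crec r g a b by apply: Crec_weaken; split.
have Hg' : Crec r g' a b by apply: Crec_weaken; split.
apply: Crec_ext (Crec_plus _ _ _ _ _ (IH _ _ _ _ Hc Hg') (IH _ _ _ _ Hg Hc')) => s Hs.
by rewrite Derive_mult //; [apply: Hd | apply: Hd'].
Qed.

Lemma Crec_shift r : forall g a b e, Crec r g a b ->
  Crec r (fun s => g (s + e)) (a - e) (b - e).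
Proof.
elim: r => [|r IH] g a b e /=.
  move=> H s Hs. apply: eps_cpt => eps Heps.
  have [dl [Hdl H']] := cpt_eps _ _ (H (s + e) ltac:(lra)) eps Heps.
  exists dl; split => // u Hu. apply: H'. by replace (u + e - (s + e)) with (u - s) by ring.
move=> [Hd Hc]; split.
  move=> s Hs. apply: ex_derive_comp; first by apply: Hd; lra.
  apply: ex_derive_plus; [apply: ex_derive_id | apply: ex_derive_const].
apply: Crec_ext (IH _ _ _ e Hc) => s Hs.
have := Derive_n_comp_trans g 1 s e. simpl. move=> ->. done.
Qed.

Lemma Derive_n_S g j s : Derive_n g (S j) s = Derive_n (Derive g) j s.
Proof.
elim: j s => [|j IH] s //=. by apply: Derive_ext => u; apply: IH.
Qed.

Lemma Crec_Dn r : forall g a b, Crec r g a b -> forall j s, a < s < b ->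
  ((j < r)%nat -> is_derive (Derive_n g j) s (Derive_n g (S j) s)) /\
  ((j <= r)%nat -> continuity_pt (Derive_n g j) s).
Proof.
elim: r => [|r IH] g a b /=.
  move=> H j s Hs; split => Hj; first by lia.
  have -> : j = O by lia. exact: H.
move=> [Hd Hc] j s Hs. case: j => [|j].
  split => _; first exact: Derive_correct (Hd s Hs).
  exact: cpt_of_ex_derive (Hd s Hs).
have [H1 H2] := IH _ _ _ Hc j s Hs.
split => Hj.
  have H1' := H1 ltac:(lia).
  have -> : Derive (Derive_n g (S j)) s = Derive_n (Derive g) (S j) s by exact: (Derive_n_S g (S j) s).
  apply: (is_derive_ext_loc (Derive_n (Derive g) j)) => //.
  apply: filter_imp (locally_open _ _ _ Hs) => u Hu. by rewrite (Derive_n_S g j u).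
apply: (continuity_pt_ext_loc (Derive_n (Derive g) j)) (H2 ltac:(lia)).
apply: filter_imp (locally_open _ _ _ Hs) => u Hu. by rewrite (Derive_n_S g j u).
Qed.

From Stdlib Require Import FunctionalExtensionality.
From mathcomp Require seq.

Module MV.
Import seq.
Section MVS.
Variable d : nat.
Local Notation J := (sum (ordinal d) (ordinal d)).
Local Notation W := (vec d * vec d)%type.

Lemma coordp_updp (w : W) (j j' : J) v :
  coordp (updp w j v) j' = if j' == j then v else coordp w j'.
Proof. by case: j => a; case: j' => b //=. Qed.

Lemma W_ext (w w' : W) : (forall j : J, coordp w j = coordp w' j) -> w = w'.
Proof.
case: w => a b; case: w' => a' b' H.
f_equal; apply: functional_extensionality => c; [exact: (H (inl c)) | exact: (H (inr c))].
Qed.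

Lemma updp_coord (w : W) j : updp w j (coordp w j) = w.
Proof. apply: W_ext => j'. rewrite coordp_updp. by case: eqP => [->|]. Qed.

Lemma updp_updp (w : W) j v v' : updp (updp w j v) j v' = updp w j v'.
Proof. apply: W_ext => j'. rewrite !coordp_updp. by case: eqP. Qed.

Lemma coordp_updp_eq (w : W) j v : coordp (updp w j v) j = v.
Proof. by rewrite coordp_updp eqxx. Qed.

Definition repl (l : seq J) (w w' : W) : W :=
  foldr (fun j acc => updp acc j (coordp w' j)) w l.

Lemma coordp_repl l w w' j :
  coordp (repl l w w') j = if j \in l then coordp w' j else coordp w j.
Proof.
elim: l => [|i l IH] //=. rewrite coordp_updp in_cons IH.
by case: eqP => [->|].
Qed.

Lemma repl_all w w' : repl (enum {: J}) w w' = w'.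
Proof. apply: W_ext => j. by rewrite coordp_repl mem_enum. Qed.

Definition lsum (l : seq J) (F : J -> R) : R := foldr (fun j acc => F j + acc) 0 l.

Definition close (w w0 : W) (dl : R) := forall j : J, Rabs (coordp w j - coordp w0 j) < dl.

Lemma close_repl l w w0 dl : 0 < dl -> close w w0 dl -> close (repl l w0 w) w0 dl.
Proof.
move=> Hd H j. rewrite coordp_repl. case: (j \in l); first exact: H.
rewrite Rminus_eq_0 Rabs_R0. done.
Qed.

Lemma close_updp w w0 dl j v : close w w0 dl -> Rabs (v - coordp w0 j) < dl ->
  close (updp w j v) w0 dl.
Proof. move=> H Hv j'. rewrite coordp_updp. case: eqP => [->|_] //. Qed.

Lemma fin_delta (P : J -> R -> Prop) :
  (forall k, exists dl, 0 < dl /\ forall dl', 0 < dl' <= dl -> P k dl') ->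
  exists dl, 0 < dl /\ forall k, P k dl.
Proof.
move=> H.
have Hl : forall l : seq J, exists dl, 0 < dl /\
    forall k, k \in l -> forall dl', 0 < dl' <= dl -> P k dl'.
  elim => [|i l [dl [Hdl IH]]]; first by exists 1; split => //; lra.
  have [di [Hdi Hi]] := H i.
  exists (Rmin dl di); split; first exact: Rmin_pos.
  move=> k; rewrite in_cons; case: eqP => [-> _|_ /= Hk] dl' Hdl'.
    apply: Hi. have := Rmin_r dl di. lra.
  apply: IH => //. have := Rmin_l dl di. lra.
have [dl [Hdl H']] := Hl (enum {: J}).
exists dl; split => // k. apply: H'; [by rewrite mem_enum | lra].
Qed.

Lemma cont2_close G w0 : cont2 G w0 ->
  forall e, 0 < e -> exists dl, 0 < dl /\ forall w, close w w0 dl -> Rabs (G w - G w0) < e.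
Proof.
move=> H e He. have [dl [Hdl H']] := H e He.
exists dl; split => // w Hw. apply: H' => c; split; [exact: (Hw (inl c)) | exact: (Hw (inr c))].
Qed.

Lemma coords_close (u : R -> W) s0 :
  (forall k : J, continuity_pt (fun s => coordp (u s) k) s0) ->
  forall dc, 0 < dc -> exists dl, 0 < dl /\
    forall s, Rabs (s - s0) < dl -> close (u s) (u s0) dc.
Proof.
move=> H dc Hdc.
have [dl [Hdl H']] : exists dl, 0 < dl /\ forall k, forall s, Rabs (s - s0) < dl ->
   Rabs (coordp (u s) k - coordp (u s0) k) < dc.
  apply: (fin_delta (fun k dl => forall s, Rabs (s - s0) < dl ->
   Rabs (coordp (u s) k - coordp (u s0) k) < dc)) => k.
  have [dl [Hdl H1]] := cpt_eps _ _ (H k) dc Hdc.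
  exists dl; split => // dl' Hdl' s Hs. apply: H1. lra.
exists dl; split => // s Hs k. exact: H'.
Qed.

Lemma comp_cont (G : W -> R) (u : R -> W) s0 : cont2 G (u s0) ->
  (forall k : J, continuity_pt (fun s => coordp (u s) k) s0) ->
  continuity_pt (fun s => G (u s)) s0.
Proof.
move=> HG Hu. apply: eps_cpt => e He.
have [dc [Hdc Hc]] := cont2_close _ _ HG e He.
have [dl [Hdl Hl]] := coords_close u s0 Hu dc Hdc.
exists dl; split => // s Hs. apply: Hc. exact: Hl.
Qed.

Lemma between_abs a b x : Rmin a b <= x <= Rmax a b -> Rabs (x - a) <= Rabs (b - a).
Proof.
rewrite /Rmin /Rmax. case: Rle_dec => H Hx; rewrite /Rabs;
  case: Rcase_abs => ?; case: Rcase_abs => ?; lra.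
Qed.

Section Chain.
Variable G : W -> R.
Hypothesis Hd : forall w j, ex_derive (fun v => G (updp w j v)) (coordp w j).
Hypothesis Hc : forall j w, cont2 (partial G j) w.

Lemma phi_derive (Q : W) j v :
  is_derive (fun v' => G (updp Q j v')) v (partial G j (updp Q j v)).
Proof.
have H := Derive_correct _ _ (Hd (updp Q j v) j).
rewrite /partial.
have E : (fun v' => G (updp (updp Q j v) j v')) = (fun v' => G (updp Q j v')).
  apply: functional_extensionality => v'. by rewrite updp_updp.
rewrite E coordp_updp_eq. rewrite E coordp_updp_eq in H. exact: H.
Qed.

Lemma psi_derive (Q : R -> W) (b : R -> R) (u0 : W) j s0 bd :
  b s0 = coordp u0 j ->
  (forall dc, 0 < dc -> exists dl, 0 < dl /\ forall s, Rabs (s - s0) < dl -> close (Q s) u0 dc) ->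
  is_derive b s0 bd ->
  is_derive (fun s => G (updp (Q s) j (b s)) - G (updp (Q s) j (b s0))) s0
    (partial G j u0 * bd).
Proof.
move=> Hb0 HQ Hbd. apply: eps_derive => e He.
set P0 := partial G j u0.
have HK : 0 < Rabs bd + 1 by have := Rabs_pos bd; lra.
have He1 : 0 < e / (2 * (Rabs bd + 1)) by apply: Rdiv_lt_0_compat; lra.
have [dc [Hdc HcP]] := cont2_close _ _ (Hc j u0) _ He1.
have [eta1 [Heta1 HQ1]] := HQ dc Hdc.
have Hbc : continuity_pt b s0 by apply: cpt_of_ex_derive; exists bd.
have [eta2 [Heta2 Hb2]] := cpt_eps _ _ Hbc dc Hdc.
have HP0 : 0 < Rabs P0 + 1 by have := Rabs_pos P0; lra.
have He3 : 0 < Rmin 1 (e / (2 * (Rabs P0 + 1))).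
  apply: Rmin_pos; [lra | apply: Rdiv_lt_0_compat; lra].
have [eta3 [Heta3 Hb3]] := derive_eps _ _ _ Hbd _ He3.
exists (Rmin eta1 (Rmin eta2 eta3)); split.
  apply: Rmin_pos => //; exact: Rmin_pos.
move=> h Hh0 Hh.
have Hm1 := Rmin_l eta1 (Rmin eta2 eta3).
have Hm2 := Rmin_l eta2 eta3. have Hm3 := Rmin_r eta2 eta3.
have Hm4 := Rmin_r eta1 (Rmin eta2 eta3).
set Qh := Q (s0 + h).
have [xi [Hxi Hmvt]] := MVT_gen (fun v => G (updp Qh j v)) (b s0) (b (s0 + h))
   (fun v => partial G j (updp Qh j v))
   (fun v _ => phi_derive Qh j v)
   (fun v _ => cpt_of_ex_derive _ _ (ex_intro _ _ (phi_derive Qh j v))).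
simpl in Hmvt.
have E0 : G (updp (Q s0) j (b s0)) - G (updp (Q s0) j (b s0)) = 0 by ring.
rewrite E0 Rminus_0_r Hmvt.
set q := (b (s0 + h) - b s0) / h.
have Eq : partial G j (updp Qh j xi) * (b (s0 + h) - b s0) / h
          = partial G j (updp Qh j xi) * q by rewrite /q; field.
rewrite Eq.
have Hq : Rabs (q - bd) < Rmin 1 (e / (2 * (Rabs P0 + 1))) by apply: Hb3 => //; lra.
clearbody q.
have Hsh : Rabs (s0 + h - s0) < Rmin eta1 (Rmin eta2 eta3) by
  replace (s0 + h - s0) with h by ring.
have Hbh : Rabs (b (s0 + h) - b s0) < dc by apply: Hb2; lra.
have Hxi' : Rabs (xi - coordp u0 j) < dc.
  rewrite -Hb0. apply: Rle_lt_trans Hbh. exact: between_abs.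
have Hcl : close (updp Qh j xi) u0 dc.
  apply: close_updp => //. apply: HQ1. lra.
have HP := HcP _ Hcl. fold P0 in HP.
have Hq1 := Rmin_l 1 (e / (2 * (Rabs P0 + 1))).
have Hq2 := Rmin_r 1 (e / (2 * (Rabs P0 + 1))).
set Pxi := partial G j (updp Qh j xi) in HP *.
have -> : Pxi * q - P0 * bd = (Pxi - P0) * q + P0 * (q - bd) by ring.
apply: Rle_lt_trans (Rabs_triang _ _) _. rewrite !Rabs_mult.
have Hqa : Rabs q < Rabs bd + 1.
  have := Rabs_triang (q - bd) bd. replace (q - bd + bd) with q by ring. lra.
have T1 : Rabs (Pxi - P0) * Rabs q < e / 2.
  apply: Rle_lt_trans (_ : Rabs (Pxi - P0) * Rabs q <= Rabs (Pxi - P0) * (Rabs bd + 1)) _.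
    apply: Rmult_le_compat_l; [apply: Rabs_pos | lra].
  have -> : e / 2 = e / (2 * (Rabs bd + 1)) * (Rabs bd + 1) by field; lra.
  apply: Rmult_lt_compat_r; lra.
have T2 : Rabs P0 * Rabs (q - bd) < e / 2.
  apply: Rle_lt_trans (_ : Rabs P0 * Rabs (q - bd) <= (Rabs P0 + 1) * Rabs (q - bd)) _.
    apply: Rmult_le_compat_r; [apply: Rabs_pos | lra].
  have -> : e / 2 = (Rabs P0 + 1) * (e / (2 * (Rabs P0 + 1))) by field; lra.
  apply: Rmult_lt_compat_l; lra.
lra.
Qed.


Lemma repl_same l w : repl l w w = w.
Proof. apply: W_ext => j. rewrite coordp_repl. by case: (j \in l). Qed.

Lemma tele (u : R -> W) s0 (bd : J -> R) :
  (forall k, is_derive (fun s => coordp (u s) k) s0 (bd k)) ->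
  forall l : seq J, uniq l ->
  is_derive (fun s => G (repl l (u s0) (u s))) s0 (lsum l (fun k => partial G k (u s0) * bd k)).
Proof.
move=> Hu.
have Hcu : forall k, continuity_pt (fun s => coordp (u s) k) s0.
  move=> k. apply: cpt_of_ex_derive. exists (bd k). exact: Hu.
elim => [|j l IH] /=.
  move=> _. exact: is_derive_const.
move=> /andP [Hjl Hl].
set Q := fun s => repl l (u s0) (u s).
have HQj : forall s, coordp (Q s) j = coordp (u s0) j.
  move=> s. rewrite /Q coordp_repl. by rewrite (negbTE Hjl).
have H2 : is_derive (fun s => (G (updp (Q s) j (coordp (u s) j)) - G (updp (Q s) j (coordp (u s0) j)))
   + G (repl l (u s0) (u s))) s0
   (plus (partial G j (u s0) * bd j) (lsum l (fun k : J => partial G k (u s0) * bd k))).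
  apply: (is_derive_plus _ _ _ _ _ _ (IH Hl)).
  apply: psi_derive => //.
  move=> dc Hdc. have [dl [Hdl H]] := coords_close u s0 Hcu dc Hdc.
  exists dl; split => // s Hs. apply: close_repl => //. exact: H.
apply: (is_derive_ext _ _ _ _ _ H2) => s.
rewrite -(HQj s) updp_coord /Q. rewrite /plus /=. ring.
Qed.

Lemma chain1 (u : R -> W) s0 (bd : J -> R) :
  (forall k, is_derive (fun s => coordp (u s) k) s0 (bd k)) ->
  is_derive (fun s => G (u s)) s0 (lsum (enum {: J}) (fun k => partial G k (u s0) * bd k)).
Proof.
move=> Hu. apply: (is_derive_ext (fun s => G (repl (enum {: J}) (u s0) (u s)))).
  move=> s. by rewrite repl_all.
apply: tele => //. exact: enum_uniq.
Qed.

End Chain.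

Lemma Crec_lsum r a b (F : J -> R -> R) : forall l : seq J,
  (forall k, Crec r (F k) a b) -> Crec r (fun s => lsum l (fun k => F k s)) a b.
Proof.
elim => [|k l IH] H /=; first exact: Crec_const.
apply: Crec_plus; [exact: H | exact: IH].
Qed.

Lemma Crec_comp (f : vec d -> vec d -> vec d) : smooth_fun f -> forall r js c (u : R -> W) a b,
  (forall k, Crec r (fun s => coordp (u s) k) a b) ->
  Crec r (fun s => iter_partial js (fun w0 => f (fst w0) (snd w0) c) (u s)) a b.
Proof.
move=> Hf. elim => [|r IH] js c u a b Hu.
  move=> s Hs /=. apply: comp_cont; first by have [_ H] := Hf c js (u s).
  move=> k. exact: Hu.
set G := iter_partial js (fun w0 => f (fst w0) (snd w0) c).
have Hd : forall w j, ex_derive (fun v => G (updp w j v)) (coordp w j).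
  move=> w j. by have [H _] := Hf c js w; apply: H.
have Hc : forall j w, cont2 (partial G j) w.
  move=> j w. by have [_ H] := Hf c (j :: js) w.
have HD : forall s, a < s < b -> is_derive (fun s => G (u s)) s
   (lsum (enum {: J}) (fun k => partial G k (u s) * Derive (fun s => coordp (u s) k) s)).
  move=> s Hs. apply: chain1 => // k. apply: Derive_correct.
  have [H _] := Hu k. exact: H.
split.
  move=> s Hs. eexists. exact: HD.
have H2 : Crec r (fun s => lsum (enum {: J}) (fun k => partial G k (u s) * Derive (fun s => coordp (u s) k) s)) a b.
  apply: (Crec_lsum r a b (fun k s => partial G k (u s) * Derive (fun s => coordp (u s) k) s)) => k.
  apply: Crec_mult.
    apply: (IH (k :: js)) => k'. apply: Crec_weaken. exact: Hu.
  by have [_ H] := Hu k.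
apply: (Crec_ext _ _ _ _ _ _ H2) => s Hs.
symmetry. apply: is_derive_unique. exact: HD.
Qed.

End MVS.
End MV.

Definition rd (g : R -> R) s L := forall e, 0 < e -> exists dl, 0 < dl /\
  forall u, s < u < s + dl -> Rabs ((g u - g s) / (u - s) - L) < e.

Lemma mvi (g F : R -> R) c e K : c < e ->
  (forall s, c <= s <= e -> continuity_pt g s) ->
  (forall s, c <= s < e -> rd g s (F s)) ->
  (forall s, c <= s < e -> F s < K) -> g e - g c <= K * (e - c).
Proof.
move=> Hce Hg HF HK.
set E := fun s => c <= s <= e /\ g s - g c <= K * (s - c).
have Eb : bound E by exists e => s [[? ?] _].
have Ec : exists s, E s by exists c; split; [lra | rewrite /Rminus !Rplus_opp_r; lra].
have [sg [Hub Hlub]] := completeness E Eb Ec.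
have Hcs : c <= sg by apply: Hub; case: Ec => s; move=> _; split; [lra| rewrite /Rminus !Rplus_opp_r; lra].
have Hse : sg <= e by apply: Hlub => s [[? ?] _].
have Esg : E sg.
  split; first lra.
  apply: Rnot_lt_le => Hlt.
  set eta := g sg - g c - K * (sg - c).
  have Heta : 0 < eta by rewrite /eta; lra.
  have [dl [Hdl H]] := cpt_eps _ _ (Hg sg ltac:(lra)) (eta / 2) ltac:(lra).
  have Hd2 : 0 < Rmin dl (eta / (2 * (Rabs K + 1))).
    apply: Rmin_pos => //. apply: Rdiv_lt_0_compat => //. have := Rabs_pos K; lra.
  set dl' := Rmin dl (eta / (2 * (Rabs K + 1))) in Hd2.
  have [s [Es Hs]] : exists s, E s /\ sg - dl' < s.
    apply: NNPP => Hn. have : sg <= sg - dl'; last lra.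
    apply: Hlub => s Es. apply: Rnot_lt_le => Hs. apply: Hn. by exists s.
  have Hssg : s <= sg by apply: Hub.
  have Hm1 : dl' <= dl := Rmin_l _ _.
  have Hm2 : dl' <= eta / (2 * (Rabs K + 1)) := Rmin_r _ _.
  have Hgs := H s ltac:(rewrite Rabs_left1; lra).
  case: Es => _ Es.
  have HK1 : Rabs K * (sg - s) <= Rabs K * (eta / (2 * (Rabs K + 1))).
    apply: Rmult_le_compat_l; [apply: Rabs_pos | lra].
  have HK2 : Rabs K * (eta / (2 * (Rabs K + 1))) < eta / 2.
    have -> : eta / 2 = (Rabs K + 1) * (eta / (2 * (Rabs K + 1))) by field; have := Rabs_pos K; lra.
    apply: Rmult_lt_compat_r; [apply: Rdiv_lt_0_compat; have := Rabs_pos K; lra | lra].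
  have HK3 : - (K * (sg - s)) <= Rabs K * (sg - s).
    have := Rle_abs (- K). rewrite Rabs_Ropp => ?.
    have -> : - (K * (sg - s)) = - K * (sg - s) by ring.
    apply: Rmult_le_compat_r; lra.
  have [Ha Hb] := Rabs_def2 _ _ Hgs. rewrite /eta in Ha Hb HK2 HK1. nra.
case: (Req_dec sg e) => [<-|Hne]; first by case: Esg.
have Hsl : sg < e by lra.
have [dl [Hdl H]] := HF sg ltac:(lra) (K - F sg) ltac:(have := HK sg ltac:(lra); lra).
set u := sg + Rmin dl (e - sg) / 2.
have Hm1 := Rmin_l dl (e - sg). have Hm2 := Rmin_r dl (e - sg).
have Hmp : 0 < Rmin dl (e - sg) by apply: Rmin_pos; lra.
have Hu := H u ltac:(rewrite /u; lra).
have [Hq _] := Rabs_def2 _ _ Hu.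
have Hq' : (g u - g sg) / (u - sg) < K by lra.
have Hus : 0 < u - sg by rewrite /u; lra.
have Hq2 : g u - g sg < K * (u - sg).
  have E1 : (g u - g sg) / (u - sg) * (u - sg) = g u - g sg by field; lra.
  have := Rmult_lt_compat_r (u - sg) _ _ Hus Hq'. by rewrite E1.
have : u <= sg; last by rewrite /u; lra.
apply: Hub. split; first by rewrite /u; lra.
case: Esg => _ ?. nra.
Qed.

Lemma rd_opp g s L : rd g s L -> rd (fun u => - g u) s (- L).
Proof.
move=> H e He. have [dl [Hdl H']] := H e He. exists dl; split => // u Hu.
have -> : (- g u - - g s) / (u - s) - - L = - ((g u - g s) / (u - s) - L) by field; lra.
rewrite Rabs_Ropp. exact: H'.
Qed.

Lemma quot_bound X w L e : 0 < w -> X <= (L + e) * w -> - X <= (- L + e) * w ->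
  Rabs (X / w - L) <= e.
Proof.
move=> Hw H1 H2. have E : X / w - L = (X - L * w) / w by field; lra.
rewrite E Rabs_div; last lra. rewrite (Rabs_right w); last lra.
apply: (Rmult_le_reg_r w) => //. rewrite /Rdiv Rmult_assoc Rinv_l; last lra.
rewrite Rmult_1_r. apply: Rabs_le. lra.
Qed.

Lemma deriv_from_right g F a b t0 : a < t0 < b ->
  (forall s, a < s < b -> continuity_pt g s) ->
  (forall s, a < s < b -> rd g s (F s)) ->
  (forall s, a < s < b -> continuity_pt F s) -> is_derive g t0 (F t0).
Proof.
move=> Ht Hg HF HFc. apply: eps_derive => e He.
have [d1 [Hd1 H1]] := cpt_eps _ _ (HFc t0 Ht) (e / 2) ltac:(lra).
have Hp : 0 < Rmin d1 (Rmin (t0 - a) (b - t0)).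
  apply: Rmin_pos => //; apply: Rmin_pos; lra.
exists (Rmin d1 (Rmin (t0 - a) (b - t0))); split => // h Hh0 Hh.
have Hm1 := Rmin_l d1 (Rmin (t0 - a) (b - t0)).
have Hm2 := Rmin_r d1 (Rmin (t0 - a) (b - t0)).
have Hm3 := Rmin_l (t0 - a) (b - t0). have Hm4 := Rmin_r (t0 - a) (b - t0).
have [Ha Hb] := Rabs_def2 _ _ Hh.
have key : forall c e', c < e' -> a < c -> e' < b -> t0 - d1 < c -> e' < t0 + d1 ->
   g e' - g c <= (F t0 + e / 2) * (e' - c) /\ - (g e' - g c) <= (- F t0 + e / 2) * (e' - c).
  move=> c e' Hce Hac Heb Hc1 He1.
  have HFs : forall s, c <= s < e' -> Rabs (F s - F t0) < e / 2.
    move=> s Hs. apply: H1. apply: Rabs_def1; lra.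
  split.
    apply: mvi => //.
      move=> s Hs; apply: Hg; lra.
      move=> s Hs; apply: HF; lra.
    move=> s Hs. have [? ?] := Rabs_def2 _ _ (HFs s Hs). lra.
  have M := mvi (fun u => - g u) (fun u => - F u) c e' (- F t0 + e / 2) Hce.
  have : (fun u => - g u) e' - (fun u => - g u) c <= (- F t0 + e / 2) * (e' - c).
    apply: M.
      move=> s Hs. apply: continuity_pt_opp. apply: Hg; lra.
      move=> s Hs; apply: rd_opp; apply: HF; lra.
    move=> s Hs. have [? ?] := Rabs_def2 _ _ (HFs s Hs). lra.
  simpl. lra.
case: (Rlt_or_le 0 h) => Hhp.
  have [K1 K2] := key t0 (t0 + h) ltac:(lra) ltac:(lra) ltac:(lra) ltac:(lra) ltac:(lra).
  apply: Rle_lt_trans (_ : _ <= e / 2) _; last lra.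
  replace (t0 + h - t0) with h in K1, K2 by ring.
  exact: (quot_bound _ h (F t0) (e / 2) Hhp K1 K2).
have Hhn : h < 0 by case: (Rle_lt_or_eq_dec _ _ Hhp) => //.
have [K1 K2] := key (t0 + h) t0 ltac:(lra) ltac:(lra) ltac:(lra) ltac:(lra) ltac:(lra).
have E : (g (t0 + h) - g t0) / h = (g t0 - g (t0 + h)) / (- h) by field.
rewrite E. apply: Rle_lt_trans (_ : _ <= e / 2) _; last lra.
replace (t0 - (t0 + h)) with (- h) in K1, K2 by ring.
apply: (quot_bound _ (- h) (F t0) (e / 2)); first lra.
  lra.
lra.
Qed.

Lemma hdw_eps a b g s l : has_deriv_within a b g s l ->
  forall e, 0 < e -> exists dl, 0 < dl /\ forall u, a <= u <= b -> u <> s ->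
    Rabs (u - s) < dl -> Rabs ((g u - g s) / (u - s) - l) < e.
Proof.
move=> H e He.
have [dl Hdl] := proj1 (filterlim_locally _ _) H (mkposreal e He).
exists dl; split; first by apply: cond_pos.
move=> u Hu Hus Hd. apply/ball_R. apply: Hdl; last by split.
by apply/ball_R.
Qed.

Lemma eps_hdw a b g s l :
  (forall e, 0 < e -> exists dl, 0 < dl /\ forall u, a <= u <= b -> u <> s ->
    Rabs (u - s) < dl -> Rabs ((g u - g s) / (u - s) - l) < e) ->
  has_deriv_within a b g s l.
Proof.
move=> H. apply/filterlim_locally => eps.
have [dl [Hdl H']] := H eps (cond_pos eps).
exists (mkposreal dl Hdl) => u Hu [Du Dn]. apply/ball_R. apply: H' => //; try by apply/ball_R.
Qed.

Lemma hdw_of_derive a b g s l : is_derive g s l -> has_deriv_within a b g s l.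
Proof.
move=> H. apply: eps_hdw => e He. have [dl [Hdl H']] := derive_eps _ _ _ H e He.
exists dl; split => // u _ Hus Hd.
have := H' (u - s) ltac:(lra) Hd. by replace (s + (u - s)) with u by ring.
Qed.

Lemma hdw_restrict a b a' b' g s l : a <= a' -> b' <= b ->
  has_deriv_within a b g s l -> has_deriv_within a' b' g s l.
Proof.
move=> H1 H2 H. apply: eps_hdw => e He. have [dl [Hdl H']] := hdw_eps _ _ _ _ _ H e He.
exists dl; split => // u Hu. apply: H'. lra.
Qed.

Lemma hdw_ext a b g g' s l : a <= s <= b -> (forall u, a <= u <= b -> g u = g' u) ->
  has_deriv_within a b g s l -> has_deriv_within a b g' s l.
Proof.
move=> Hs He H. apply: eps_hdw => e Hep. have [dl [Hdl H']] := hdw_eps _ _ _ _ _ H e Hep.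
exists dl; split => // u Hu Hus Hd. rewrite -(He u Hu) -(He s Hs). exact: H'.
Qed.

Lemma hdw_unique a b g s l l' : a < b -> a <= s <= b ->
  has_deriv_within a b g s l -> has_deriv_within a b g s l' -> l = l'.
Proof.
move=> Hab Hs H H'. apply: NNPP => Hne.
have He : 0 < Rabs (l - l') / 2.
  have : 0 < Rabs (l - l') by apply: Rabs_pos_lt; lra.
  lra.
have [d1 [Hd1 H1]] := hdw_eps _ _ _ _ _ H _ He.
have [d2 [Hd2 H2]] := hdw_eps _ _ _ _ _ H' _ He.
have [u [Hu [Hus Hd]]] : exists u, a <= u <= b /\ u <> s /\ Rabs (u - s) < Rmin d1 d2.
  have Hm : 0 < Rmin d1 d2 by apply: Rmin_pos.
  case: (Rlt_or_le s b) => Hsb.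
    have Hm2 : 0 < Rmin (Rmin d1 d2) (b - s) by apply: Rmin_pos; lra.
    have := Rmin_l (Rmin d1 d2) (b - s). have := Rmin_r (Rmin d1 d2) (b - s) => ? ?.
    exists (s + Rmin (Rmin d1 d2) (b - s) / 2); split; [lra | split; [lra|]].
    rewrite Rabs_right; lra.
  have Hm2 : 0 < Rmin (Rmin d1 d2) (s - a) by apply: Rmin_pos; lra.
  have := Rmin_l (Rmin d1 d2) (s - a). have := Rmin_r (Rmin d1 d2) (s - a) => ? ?.
  exists (s - Rmin (Rmin d1 d2) (s - a) / 2); split; [lra | split; [lra|]].
  rewrite Rabs_left; lra.
have := Rmin_l d1 d2. have := Rmin_r d1 d2 => ? ?.
have A1 := H1 u Hu Hus ltac:(lra). have A2 := H2 u Hu Hus ltac:(lra).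
have := Rabs_triang ((g u - g s) / (u - s) - l') (- ((g u - g s) / (u - s) - l)).
rewrite Rabs_Ropp.
replace ((g u - g s) / (u - s) - l' + - ((g u - g s) / (u - s) - l)) with (l - l') by ring.
lra.
Qed.

Lemma chain_unique {d : nat} a b k (g : R -> vec d) D D' : a < b ->
  deriv_chain a b k g D -> deriv_chain a b k g D' ->
  forall j, (j <= k)%nat -> forall s, a <= s <= b -> forall c, D j s c = D' j s c.
Proof.
move=> Hab [H0 H1] [H0' H1']. elim => [|j IH] Hj s Hs c.
  by rewrite H0 // H0'.
apply: (hdw_unique a b (fun u => D j u c) s) => //.
  exact: H1.
apply: (hdw_ext a b (fun u => D' j u c)) => //.
  move=> u Hu. symmetry. apply: IH => //. lia.
exact: H1'.
Qed.

Lemma chain_restrict {d : nat} a b a' b' k (g : R -> vec d) D : a <= a' -> b' <= b ->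
  deriv_chain a b k g D -> deriv_chain a' b' k g D.
Proof.
move=> H1 H2 [H0 Hd]; split.
  move=> s Hs. apply: H0. lra.
move=> j s Hj Hs c. apply: (hdw_restrict a b) => //. apply: Hd => //. lra.
Qed.

Lemma chain_ext {d : nat} a b k (g g' : R -> vec d) D :
  (forall s, a <= s <= b -> forall c, g s c = g' s c) ->
  deriv_chain a b k g D -> deriv_chain a b k g' D.
Proof.
move=> He [H0 Hd]; split => //. move=> s Hs c. rewrite -He //. exact: H0.
Qed.

Section Reg.
Variables (d : nat) (tau : R) (f : vec d -> vec d -> vec d) (x0 : R -> vec d) (T : R) (x : R -> vec d).
Hypothesis Htau : 0 < tau.
Hypothesis Hf : smooth_fun f.
Hypothesis Hx0c : forall s, -tau <= s <= 0 -> forall c, cont_within (Icc (-tau) 0) (fun u => x0 u c) s.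
Hypothesis Hsol : is_solution tau f x0 T x.

Lemma sol_cont c : Crec 0 (fun u => x u c) (- tau) T.
Proof.
move=> y Hy. case: Hsol => Hx0 [Hxc _].
apply: eps_cpt => e He.
have L1 : 0 <= y -> exists dl, 0 < dl /\ forall u, 0 <= u <= T -> Rabs (u - y) < dl -> Rabs (x u c - x y c) < e.
  move=> Hy0. exact: (cw_eps _ _ _ (Hxc y ltac:(lra) c)).
have L2 : y <= 0 -> exists dl, 0 < dl /\ forall u, -tau <= u <= 0 -> Rabs (u - y) < dl -> Rabs (x u c - x y c) < e.
  move=> Hy0. have [dl [Hdl H]] := cw_eps _ _ _ (Hx0c y ltac:(lra) c) e He.
  exists dl; split => // u Hu Hd. rewrite !Hx0 //; [|lra]. exact: H.
case: (Rtotal_order y 0) => [Hlt|[Heq|Hgt]].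
- have [dl [Hdl H]] := L2 ltac:(lra).
  have Hp : 0 < Rmin dl (Rmin (- y) (y + tau)) by apply: Rmin_pos => //; apply: Rmin_pos; lra.
  exists (Rmin dl (Rmin (- y) (y + tau))); split => // u Hu.
  have := Rmin_l dl (Rmin (- y) (y + tau)). have := Rmin_r dl (Rmin (- y) (y + tau)).
  have := Rmin_l (- y) (y + tau). have := Rmin_r (- y) (y + tau).
  have [? ?] := Rabs_def2 _ _ Hu => ? ? ? ?. apply: H; lra.
- have [d1 [Hd1 H1]] := L1 ltac:(lra). have [d2 [Hd2 H2]] := L2 ltac:(lra).
  have Hp : 0 < Rmin (Rmin d1 d2) (Rmin tau (T - y)).
    apply: Rmin_pos; apply: Rmin_pos; lra.
  exists (Rmin (Rmin d1 d2) (Rmin tau (T - y))); split => // u Hu.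
  have := Rmin_l (Rmin d1 d2) (Rmin tau (T - y)). have := Rmin_r (Rmin d1 d2) (Rmin tau (T - y)).
  have := Rmin_l d1 d2. have := Rmin_r d1 d2.
  have := Rmin_l tau (T - y). have := Rmin_r tau (T - y).
  have [? ?] := Rabs_def2 _ _ Hu => ? ? ? ? ? ?.
  case: (Rle_or_lt 0 u) => Hu0; [apply: H1 | apply: H2]; lra.
- have [dl [Hdl H]] := L1 ltac:(lra).
  have Hp : 0 < Rmin dl (Rmin y (T - y)) by apply: Rmin_pos => //; apply: Rmin_pos; lra.
  exists (Rmin dl (Rmin y (T - y))); split => // u Hu.
  have := Rmin_l dl (Rmin y (T - y)). have := Rmin_r dl (Rmin y (T - y)).
  have := Rmin_l y (T - y). have := Rmin_r y (T - y).
  have [? ?] := Rabs_def2 _ _ Hu => ? ? ? ?. apply: H; lra.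
Qed.

Definition Fc (c : 'I_d) (s : R) : R := f (x s) (x (s - tau)) c.

Definition uu (s : R) : vec d * vec d := (x s, x (s - tau)).

Lemma F_cont c : Crec 0 (Fc c) 0 T.
Proof.
have H := MV.Crec_comp d f Hf 0 nil c uu 0 T.
apply: H => k s Hs. case: k => c' /=.
  apply: sol_cont; lra.
have := Crec_shift 0 (fun u => x u c') (- tau) T (- tau) (sol_cont c') s ltac:(lra).
done.
Qed.

Lemma x_C1 c : Crec 1 (fun u => x u c) 0 T.
Proof.
case: Hsol => Hx0 [Hxc Hrd].
have HD : forall s, 0 < s < T -> is_derive (fun u => x u c) s (Fc c s).
  move=> s Hs. apply: (deriv_from_right _ _ 0 T) => //.
  - move=> u Hu. apply: sol_cont; lra.
  - move=> u Hu e He. have [dl [Hdl H]] := ar_eps _ _ _ (Hrd u ltac:(lra) c) e He.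
    exists dl; split => //.
  - exact: F_cont.
split.
  move=> s Hs. eexists. exact: HD s Hs.
apply: (Crec_ext _ _ _ _ _ _ (F_cont c)) => s Hs. symmetry. apply: is_derive_unique. exact: HD.
Qed.

Lemma x_reg r : forall c, Crec (S r) (fun u => x u c) (INR r * tau) T.
Proof.
elim: r => [|r IH] c.
  apply: (Crec_sub _ _ 0 T) ; [rewrite /= Rmult_0_l; lra | lra | exact: x_C1].
have Hr : 0 <= INR r * tau by apply: Rmult_le_pos; [apply: pos_INR | lra].
have HrS : INR (S r) * tau = INR r * tau + tau by rewrite S_INR; ring.
have [Hd1 Hc1] := x_C1 c.
split.
  move=> s Hs. apply: Hd1. lra.
have HF : Crec (S r) (Fc c) (INR (S r) * tau) T.
  apply: (MV.Crec_comp d f Hf (S r) nil c uu) => k.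
  case: k => c'.
    apply: (Crec_sub _ _ (INR r * tau) T) => //; [lra | lra | exact: IH].
  have := Crec_shift (S r) (fun u => x u c') (INR r * tau) T (- tau) (IH c').
  apply: Crec_sub; lra.
apply: (Crec_ext _ _ _ _ _ _ HF) => s Hs.
symmetry. apply: is_derive_unique.
case: Hsol => Hx0 [Hxc Hrd].
apply: (deriv_from_right _ _ 0 T); try lra.
- move=> u Hu. apply: sol_cont; lra.
- move=> u Hu e He. have [dl [Hdl H]] := ar_eps _ _ _ (Hrd u ltac:(lra) c) e He.
  exists dl; split => //.
- exact: F_cont.
Qed.

End Reg.

Lemma is_derive_trans (g : R -> R) t u l : is_derive g (t + u) l ->
  is_derive (fun v => g (t + v)) u l.
Proof.
move=> H. apply: eps_derive => e He. have [dl [Hdl H']] := derive_eps _ _ _ H e He.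
exists dl; split => // k Hk Hk'. rewrite -Rplus_assoc. exact: H'.
Qed.

Lemma in_box_ext {d : nat} (v v' : vec d) B : (forall c, v c = v' c) -> in_box v' B -> in_box v B.
Proof. move=> H Hb c. rewrite H. exact: Hb. Qed.

Section Assembly.
Variables (d : nat) (x : R -> vec d) (K : nat) (al be : R).
Hypothesis Hreg : forall c, Crec K (fun u => x u c) al be.

Lemma reg_chain a b : al < a -> b < be ->
  deriv_chain a b K x (fun j s c => Derive_n (fun u => x u c) j s).
Proof.
move=> Ha Hb; split => // j s Hj Hs c.
apply: hdw_of_derive. have [H _] := Crec_Dn _ _ _ _ (Hreg c) j s ltac:(lra). exact: H.
Qed.

Lemma seg_chain t a b : al < t + a -> t + b < be ->
  deriv_chain a b K (seg x t) (fun j u c => Derive_n (fun v => x v c) j (t + u)).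
Proof.
move=> Ha Hb; split => // j s Hj Hs c.
apply: hdw_of_derive. apply: (is_derive_trans (Derive_n (fun v => x v c) j)).
have [H _] := Crec_Dn _ _ _ _ (Hreg c) j (t + s) ltac:(lra). exact: H.
Qed.

Lemma seg_Ck t a b : al < t + a -> t + b < be -> Ck_on a b K (seg x t).
Proof.
move=> Ha Hb. exists (fun j u c => Derive_n (fun v => x v c) j (t + u)); split.
  exact: seg_chain.
move=> s Hs c. apply: eps_cw => e He.
have [_ H] := Crec_Dn _ _ _ _ (Hreg c) K (t + s) ltac:(lra).
have [dl [Hdl H']] := cpt_eps _ _ (H (le_n _)) e He.
exists dl; split => // u _ Hu. apply: H'. by replace (t + u - (t + s)) with (u - s) by ring.
Qed.

Lemma chain_lower {dd : nat} a b k k' (g : R -> vec dd) D : (k <= k')%nat ->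
  deriv_chain a b k' g D -> deriv_chain a b k g D.
Proof. move=> Hk [H0 H1]; split => // j s Hj. apply: H1. lia. Qed.

Lemma hyp_val a b k s v : al < a -> a < b -> b < be -> (k <= K)%nat -> a <= s <= b ->
  taylor_at a b k x s v -> forall c, v c = Derive_n (fun u => x u c) k s / INR (fact k).
Proof.
move=> H1 H2 H3 Hk Hs [D [HD Hv]] c. rewrite Hv.
have := chain_unique a b k x D _ H2 HD (chain_lower a b k K x _ Hk (reg_chain a b H1 H3)) k (le_n _) s Hs c.
by move=> ->.
Qed.

Lemma seg_val t (yt : R -> vec d) a b k s v : al < t + a -> t + b <= be -> (k <= K)%nat ->
  a <= s < b -> (forall u, a <= u < b -> forall c, yt u c = seg x t u c) ->
  taylor_at a b k yt s v -> forall c, v c = Derive_n (fun u => x u c) k (t + s) / INR (fact k).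
Proof.
move=> H1 H2 Hk Hs Hy [D [HD Hv]] c. rewrite Hv.
set b' := (s + b) / 2.
have HD1 : deriv_chain a b' k yt D by apply: (chain_restrict a b _ _ _ _ D _ _ HD); rewrite /b'; lra.
have HD2 : deriv_chain a b' k (seg x t) D.
  apply: (chain_ext a b' k yt) => // u Hu c'. apply: Hy. rewrite /b' in Hu; lra.
have HR : deriv_chain a b' k (seg x t) (fun j u c => Derive_n (fun v => x v c) j (t + u)).
  apply: (chain_lower a b' k K) => //. apply: seg_chain => //. rewrite /b'; lra.
have := chain_unique a b' k (seg x t) _ _ ltac:(rewrite /b'; lra) HD2 HR k (le_n _) s ltac:(rewrite /b'; lra) c.
by move=> ->.
Qed.

Lemma hyp_box a b k s (v : vec d) B : al < a -> a < b -> b < be -> (k <= K)%nat -> a <= s <= b ->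
  (exists v', taylor_at a b k x s v' /\ in_box v' B) ->
  (forall c, v c = Derive_n (fun u => x u c) k s / INR (fact k)) -> in_box v B.
Proof.
move=> H1 H2 H3 Hk Hs [v' [Hv' Hb]] Hv. apply: (in_box_ext v v') => // c.
rewrite Hv (hyp_val a b k s v') //.
Qed.

End Assembly.

Lemma taylor0 {d : nat} a b (g : R -> vec d) s v : a <= s <= b -> taylor_at a b 0 g s v ->
  forall c, v c = g s c.
Proof.
move=> Hs [D [[H0 _] Hv]] c. rewrite Hv H0 //=. field.
Qed.



Lemma in_hull_of {d : nat} (v : vec d) A As : In A As -> in_box v A -> in_hull v As.
Proof. move=> HA Hv B HB. exact: HB A HA v Hv. Qed.

Lemma In_hl_A {d : nat} (A : box d) B r Z : In A (hull_list A B r Z).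
Proof. by left. Qed.

Lemma In_hl_B {d : nat} (A : box d) B r Z j : (1 <= j <= r)%nat -> In (B j) (hull_list A B r Z).
Proof.
move=> Hj. right. apply: in_or_app. left. apply: in_map. apply/in_seq. lia.
Qed.

Lemma In_hl_Z {d : nat} (A : box d) B r Z : In Z (hull_list A B r Z).
Proof. right. apply: in_or_app. right. by left. Qed.

Lemma pick_interval M h e1 e2 (mb : nat) s : 0 < h -> 0 < e1 < h -> 0 < e2 < h -> (1 <= mb)%nat ->
  M * h + e1 <= s <= (M + INR mb) * h + e2 ->
  (M * h + e1 <= s <= (M + 1) * h) \/
  (exists j : nat, (1 <= j <= mb - 1)%nat /\ (M + INR j) * h <= s <= (M + INR j + 1) * h) \/
  ((M + INR mb) * h <= s <= (M + INR mb) * h + e2).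
Proof.
move=> Hh He1 He2 Hmb Hs.
case: (Rle_or_lt s ((M + 1) * h)) => H1; first by left; lra.
case: (Rle_or_lt ((M + INR mb) * h) s) => H2; first by right; right; lra.
right; left.
set y := (s - M * h) / h.
have Es : s = M * h + y * h by rewrite /y; field; lra.
have Hy0 : 1 < y.
  apply: (Rmult_lt_reg_r h) => //. lra.
have Hy1 : y < INR mb.
  apply: (Rmult_lt_reg_r h) => //. lra.
have [j [Hj1 Hj2]] := nfloor_ex y ltac:(lra).
exists j; split.
  have A : (0 < j)%nat by apply: INR_lt; rewrite /=; lra.
  have B : (j < mb)%nat by apply: INR_lt; lra.
  lia.
have : INR j * h <= y * h by apply: Rmult_le_compat_r; lra.
have : y * h < (INR j + 1) * h by apply: Rmult_lt_compat_r; lra.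
lra.
Qed.

Lemma pick_interval2 M h e1 e2 (mb : nat) s : 0 < h -> 0 < e1 < h -> 0 < e2 < h -> (1 <= mb)%nat ->
  M * h + e1 <= s <= (M + INR mb + 1) * h + e2 ->
  (M * h + e1 <= s <= (M + 1) * h) \/
  (exists j : nat, (1 <= j <= mb)%nat /\ (M + INR j) * h <= s <= (M + INR j + 1) * h) \/
  ((M + INR mb + 1) * h <= s <= (M + INR mb + 1) * h + e2).
Proof.
move=> Hh He1 He2 Hmb Hs.
have E : INR (mb + 1) = INR mb + 1 by rewrite plus_INR.
have := pick_interval M h e1 e2 (mb + 1) s Hh He1 He2 ltac:(lia) ltac:(rewrite E; lra).
rewrite E. case=> [H|[[j [Hj H]]|H]].
- by left.
- right; left. exists j; split => //. lia.
- right; right; lra.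
Qed.
Theorem mainTheorem3
  (d p : nat) (tau : R) (f : vec d -> vec d -> vec d)
  (x0 : R -> vec d) (T : R) (x : R -> vec d)
  (m mbar : nat) (eps1 eps2 : R)
  (L : nat -> nat -> box d) (C : nat -> nat -> nat -> box d)
  (Rb Rt : nat -> nat -> box d) :
  (1 <= d)%nat -> (1 <= p)%nat -> 0 < tau -> smooth_fun f ->
  (exists eta : nat -> nat, in_Cp p tau eta x0) ->
  (forall s, -tau <= s <= 0 -> forall c, cont_within (Icc (-tau) 0) (fun u => x0 u c) s) ->
  is_solution tau f x0 T x ->
  (1 <= mbar)%nat ->
  0 < eps1 < hstep p tau -> 0 < eps2 < hstep p tau ->
  INR (m + mbar + 1) * hstep p tau + eps2 <= T ->
  (1 <= m / p)%nat ->
  let h := hstep p tau in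
  let n := (m / p - 1)%nat in
  (forall k i : nat, (k <= S n)%nat -> (i <= p)%nat ->
     forall s, (INR m - INR i) * h + eps1 <= s <= (INR m - INR i + 1) * h ->
     exists v, taylor_at ((INR m - INR i) * h + eps1) ((INR m - INR i + 1) * h) k x s v
               /\ in_box v (L k i)) ->
  (forall k i j : nat, (k <= S n)%nat -> (i <= p)%nat -> (1 <= j <= mbar)%nat ->
     forall s, (INR m - INR i + INR j) * h <= s <= (INR m - INR i + INR j + 1) * h ->
     exists v, taylor_at ((INR m - INR i + INR j) * h) ((INR m - INR i + INR j + 1) * h) k x s v
               /\ in_box v (C k i j)) ->
  (forall k i : nat, (k <= S n)%nat -> (i <= p)%nat ->
     forall s, (INR m - INR i + INR mbar) * h <= s <= (INR m - INR i + INR mbar) * h + eps2 ->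
     exists v, taylor_at ((INR m - INR i + INR mbar) * h) ((INR m - INR i + INR mbar) * h + eps2) k x s v
               /\ in_box v (Rb k i)) ->
  (forall k i : nat, (k <= S n)%nat -> (i <= p)%nat ->
     forall s, (INR m - INR i + INR mbar + 1) * h <= s <= (INR m - INR i + INR mbar + 1) * h + eps2 ->
     exists v, taylor_at ((INR m - INR i + INR mbar + 1) * h) ((INR m - INR i + INR mbar + 1) * h + eps2) k x s v
               /\ in_box v (Rt k i)) ->
  forall t, INR m * h + eps1 <= t <= INR (m + mbar) * h + eps2 ->
    (* (a) *)
    (in_Cp p tau (fun _ => n) (seg x t) /\ Ck_on (-tau) 0 (S n) (seg x t)) /\
    (* (b) *)
    in_hull (seg x t 0) (hull_list (L O O) (C O O) (mbar - 1) (Rb O O)) /\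
    (* (c) *)
    (forall i k : nat, (1 <= i <= p)%nat -> (k <= n)%nat ->
       forall v, jcoef p tau (seg x t) i k v ->
         in_hull v (hull_list (L k i) (C k i) (mbar - 1) (Rb k i))) /\
    (* (d) *)
    (forall i : nat, (1 <= i <= p)%nat ->
       forall s, 0 <= s < h ->
       forall v, xicoef p tau n (seg x t) i s v ->
         in_hull v (hull_list (L (S n) i) (C (S n) i) mbar (Rt (S n) i))).
Proof.
move=> Hd Hp Htau Hf _ Hx0c Hsol Hmb He1 He2 HT Hmp h n HL HC HR HRt t Ht.
have Eh : hstep p tau = h by []. clearbody h.
have En : n = (m / p - 1)%nat by []. clearbody n.
have Hp0 : 0 < INR p by apply: lt_0_INR; lia.
have Hh : 0 < h by rewrite -Eh /hstep; apply: Rdiv_lt_0_compat.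
have Htauh : tau = INR p * h by rewrite -Eh /hstep; field; lra.
have Hmq : (p * (m / p) <= m)%nat by apply: Nat.mul_div_le; lia.
have Hmq' : INR p * INR (m / p) <= INR m by rewrite -mult_INR; apply: le_INR.
have Hn : INR n = INR (m / p) - 1 by rewrite En minus_INR; [simpl; lra | lia].
set al := INR n * tau.
have Hal : al <= INR m * h - INR p * h.
  have -> : al = (INR p * INR (m / p) - INR p) * h by rewrite /al Hn Htauh; ring.
  have : (INR p * INR (m / p) - INR p) * h <= (INR m - INR p) * h.
    apply: Rmult_le_compat_r; lra.
  lra.
have Hreg : forall c, Crec (S n) (fun u => x u c) al T.
  move=> c. exact: (x_reg d tau f x0 T x Htau Hf Hx0c Hsol n c).
have HT' : INR m * h + INR mbar * h + h + eps2 <= T.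
  move: HT. rewrite Eh !plus_INR /=. lra.
have Ht' : INR m * h + eps1 <= t <= INR m * h + INR mbar * h + eps2.
  move: Ht. rewrite plus_INR. lra.
have Hiph : forall i, (i <= p)%nat -> INR i * h <= INR p * h.
  move=> i Hi. apply: Rmult_le_compat_r; [lra | apply: le_INR; lia].
have Hi1h : forall i, (1 <= i)%nat -> h <= INR i * h.
  move=> i Hi. have := Rmult_le_compat_r h 1 (INR i) ltac:(lra) ltac:(apply: (le_INR 1); lia). lra.
have Hjm : forall j, (j <= mbar)%nat -> INR j * h <= INR mbar * h.
  move=> j Hj. apply: Rmult_le_compat_r; [lra | apply: le_INR; lia].
have Hjm1 : forall j, (j <= mbar - 1)%nat -> INR j * h <= INR mbar * h - h.
  move=> j Hj. have : INR j <= INR mbar - 1.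
    have := le_INR _ _ Hj. rewrite minus_INR /=; [lra | lia].
  move=> Hj'. have := Rmult_le_compat_r h _ _ ltac:(lra) Hj'. lra.
have Hmbh : h <= INR mbar * h by apply: Hi1h.
split; [split|split; [|split]].
-
  move=> i Hi. exists (seg x t); split => //.
  rewrite /tgrid Eh Nat.add_1_r.
  have := Hiph i ltac:(lia). have := Hi1h i ltac:(lia).
  move=> ? ?. apply: (seg_Ck d x (S n) al T Hreg); lra.
-
  apply: (seg_Ck d x (S n) al T Hreg); lra.
-
  have I0 : INR 0 = 0 by [].
  have := pick_interval (INR m - INR 0) h eps1 eps2 mbar (t + 0) Hh ltac:(rewrite -Eh; lra)
    ltac:(rewrite -Eh; lra) Hmb ltac:(rewrite I0; lra).
  case=> [H|[[j [Hj H]]|H]].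
  + have [v [Hv Hb]] := HL 0%nat 0%nat ltac:(lia) ltac:(lia) (t + 0) H.
    apply: (in_hull_of _ (L 0%nat 0%nat)); first exact: In_hl_A.
    apply: (in_box_ext _ v) => // c. by rewrite (taylor0 _ _ _ _ _ H Hv c).
  + have [v [Hv Hb]] := HC 0%nat 0%nat j ltac:(lia) ltac:(lia) ltac:(lia) (t + 0) H.
    apply: (in_hull_of _ (C 0%nat 0%nat j)); first by apply: In_hl_B; lia.
    apply: (in_box_ext _ v) => // c. by rewrite (taylor0 _ _ _ _ _ H Hv c).
  + have [v [Hv Hb]] := HR 0%nat 0%nat ltac:(lia) ltac:(lia) (t + 0) H.
    apply: (in_hull_of _ (Rb 0%nat 0%nat)); first exact: In_hl_Z.
    apply: (in_box_ext _ v) => // c. by rewrite (taylor0 _ _ _ _ _ H Hv c).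
-
  move=> i k Hi Hk v [yt [Hyt Hv]].
  rewrite /tgrid Eh in Hyt Hv.
  have := Hiph i ltac:(lia). have := Hi1h i ltac:(lia). move=> Hi1 Hip.
  have Hval := seg_val d x (S n) al T Hreg t yt (- INR i * h) (- INR i * h + h) k (- INR i * h) v
     ltac:(lra) ltac:(lra) ltac:(lia) ltac:(lra) Hyt Hv.
  have := pick_interval (INR m - INR i) h eps1 eps2 mbar (t + - INR i * h) Hh ltac:(rewrite -Eh; lra)
    ltac:(rewrite -Eh; lra) Hmb ltac:(lra).
  case=> [H|[[j [Hj H]]|H]].
  + apply: (in_hull_of _ (L k i)); first exact: In_hl_A.
    apply: (hyp_box d x (S n) al T Hreg ((INR m - INR i) * h + eps1) ((INR m - INR i + 1) * h) k (t + - INR i * h)); [lra|lra|lra|lia|lra| |exact: Hval].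
    apply: (HL k i); try lia; lra.
  + have := Hi1h j ltac:(lia). have := Hjm1 j ltac:(lia). move=> ? ?.
    apply: (in_hull_of _ (C k i j)); first by apply: In_hl_B; lia.
    apply: (hyp_box d x (S n) al T Hreg ((INR m - INR i + INR j) * h) ((INR m - INR i + INR j + 1) * h) k (t + - INR i * h)); [lra|lra|lra|lia|lra| |exact: Hval].
    apply: (HC k i j); try lia; lra.
  + apply: (in_hull_of _ (Rb k i)); first exact: In_hl_Z.
    apply: (hyp_box d x (S n) al T Hreg ((INR m - INR i + INR mbar) * h) ((INR m - INR i + INR mbar) * h + eps2) k (t + - INR i * h)); [lra|lra|lra|lia|lra| |exact: Hval].
    apply: (HR k i); try lia; lra.
-
  move=> i Hi s0 Hs0 v [yt [Hyt Hv]].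
  rewrite /tgrid Eh in Hyt Hv.
  have := Hiph i ltac:(lia). have := Hi1h i ltac:(lia). move=> Hi1 Hip.
  have Hval := seg_val d x (S n) al T Hreg t yt (- INR i * h) (- INR i * h + h) (S n) (- INR i * h + s0) v
     ltac:(lra) ltac:(lra) ltac:(lia) ltac:(lra) Hyt Hv.
  have := pick_interval2 (INR m - INR i) h eps1 eps2 mbar (t + (- INR i * h + s0)) Hh ltac:(rewrite -Eh; lra)
    ltac:(rewrite -Eh; lra) Hmb ltac:(lra).
  case=> [H|[[j [Hj H]]|H]].
  + apply: (in_hull_of _ (L (S n) i)); first exact: In_hl_A.
    apply: (hyp_box d x (S n) al T Hreg ((INR m - INR i) * h + eps1) ((INR m - INR i + 1) * h) (S n) (t + (- INR i * h + s0))); [lra|lra|lra|lia|lra| |exact: Hval].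
    apply: (HL (S n) i); try lia; lra.
  + have := Hi1h j ltac:(lia). have := Hjm j ltac:(lia). move=> ? ?.
    apply: (in_hull_of _ (C (S n) i j)); first by apply: In_hl_B; lia.
    apply: (hyp_box d x (S n) al T Hreg ((INR m - INR i + INR j) * h) ((INR m - INR i + INR j + 1) * h) (S n) (t + (- INR i * h + s0))); [lra|lra|lra|lia|lra| |exact: Hval].
    apply: (HC (S n) i j); try lia; lra.
  + apply: (in_hull_of _ (Rt (S n) i)); first exact: In_hl_Z.
    apply: (hyp_box d x (S n) al T Hreg ((INR m - INR i + INR mbar + 1) * h) ((INR m - INR i + INR mbar + 1) * h + eps2) (S n) (t + (- INR i * h + s0))); [lra|lra|lra|lia|lra| |exact: Hval].
    apply: (HRt (S n) i); try lia; lra.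
Qed.
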